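(* Fix $\theta\in\mathbb{R}^d$, a coarsening function $c:\mathcal{D}\to\mathcal{D}$, and $\ell\in[L]$. Let $(C,D)\sim\mathbb{G}$, $U\sim\mathbb{U}$, $\tilde D_1\sim\mathbb{P}_\theta(C)=\mathsf{T}(\theta,C)$ and $\tilde D_2\sim\mathbb{Q}_\theta(C)=\mathsf{S}(\theta,C)$, and assume $\tilde D_1,\tilde D_2,U$ are pairwise independent. Let $g:\mathcal{D}\times\mathcal{U}\to[0,1]$ be a minimizer, over all functions $f:\mathcal{D}\times\mathcal{U}\to[0,1]$, of $\sum_{i\in\{1,2\}}\mathbf{E}[\lvert f(c(\tilde D_i),U)-h_\ell(D,U)\rvert]$. Define $$\gamma=\sum_{i\in\{1,2\}}\mathbf{E}[\lvert h_\ell(c(\tilde D_i),U)-h_\ell(\tilde D_i,U)\rvert],\qquad \varphi=\sum_{i\in\{1,2\}}\mathbf{E}[\lvert g(c(\tilde D_i),U)-h_\ell(D,U)\rvert],$$ $$\delta=\mathbf{E}\Big[\sum_{x\in c(\mathcal{D})}\lvert g(x,U)-h_\ell(x,U)\rvert\Big].$$ Then $$\mathbf{TD}^\ell_{\mathsf{T}}(\theta)\le \gamma+\varphi+\mathbf{TD}^\ell_{\mathsf{S}}(\theta)+\sqrt{\varepsilon_c(\tilde D_1,\tilde D_2)\cdot\delta}.$$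
   Context: $\mathcal{C}$ is a set of dialogue contexts, $\mathcal{D}$ a set of dialogues, $\mathcal{U}$ an arbitrary set with a distribution $\mathbb{U}$ on it. $\mathbb{G}$ is a (goal) distribution on $\mathcal{C}\times\mathcal{D}$. Test functions $h_1,\dots,h_L:\mathcal{D}\times\mathcal{U}\to[0,1]$ are fixed. An environment $\mathsf{E}$ is a map $(\theta,c)\mapsto\mathbb{P}_\theta(c)$ assigning to parameters $\theta\in\mathbb{R}^d$ and context $c\in\mathcal{C}$ a distribution over $\mathcal{D}$; $\mathsf{S}$ and $\mathsf{T}$ are two environments. Test divergence: $\mathbf{TD}^\ell_{\mathsf{E}}(\theta)=\mathbf{E}[\lvert h_\ell(D,U)-h_\ell(\hat D,U)\rvert]$ where $(C,D)\sim\mathbb{G}$, $\hat D\sim\mathsf{E}(\theta,C)$, $U\sim\mathbb{U}$ independent. Coarsening function: a map $c:\mathcal{D}\to\mathcal{D}$ with $c(\mathcal{D})$ finite and $\lvert c(\mathcal{D})\rvert<\lvert\mathcal{D}\rvert$. Discrete energy distance: for independent $A,B$, $\varepsilon_{01}(A,B)=2\mathbf{E}[1\{A\neq B\}]-\mathbf{E}[1\{A\neq A'\}]-\mathbf{E}[1\{B\neq B'\}]$ with $A',B'$ independent copies of $A,B$; and $\varepsilon_c(A,B)=\varepsilon_{01}(c(A),c(B))$. *)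

(* Defs.v *)
From HB Require Import structures.
From mathcomp Require Import all_boot all_order ssralg ssrnum ssrint interval matrix.
From mathcomp Require Import mathcomp_extra boolp classical_sets functions.
From mathcomp Require Import cardinality fsbigop reals ereal topology.
From mathcomp Require Import normedtype sequences esum measure.
From mathcomp Require Import measurable_realfun numfun lebesgue_measure.
From mathcomp Require Import lebesgue_integral kernel probability.
Set Implicit Arguments. Unset Strict Implicit. Unset Printing Implicit Defensive.
Import Order.TTheory GRing.Theory Num.Theory.
Local Open Scope classical_set_scope.
Local Open Scope ring_scope.

Definition Ex {R : realType} {d} {T : measurableType d} (P : probability T R)
  (f : T -> R) : R := fine (\int[P]_w (f w)%:E)%E.

Definition test_fun {R : realType} {dD dU} {TD : measurableType dD}
  {TU : measurableType dU} (f : TD * TU -> R) : Prop :=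
  measurable_fun setT f /\ (forall p, 0 <= f p <= 1).

Definition coarsening {dD} {TD : measurableType dD} (c : TD -> TD) : Prop :=
  finite_set (range c) /\ ~ (([set: TD] #<= range c)%card) /\
  (forall x, measurable (c @^-1` [set x])).

Definition environment (R : realType) (d : nat) {dC dD}
  (TC : measurableType dC) (TD : measurableType dD) :=
  'rV[R]_d -> R.-pker TC ~> TD.

Definition test_div {R : realType} {d : nat} {dC dD dU} {TC : measurableType dC}
  {TD : measurableType dD} {TU : measurableType dU}
  (G : probability (TC * TD)%type R) (PU : probability TU R)
  (hl : TD * TU -> R) (E : environment R d TC TD) (theta : 'rV[R]_d) : R :=
  fine (\int[G]_z \int[E theta z.1]_d' \int[PU]_u
          (`|hl (z.2, u) - hl (d', u)|)%:E)%E.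

(* The joint law of (C, D, Dt, U) on the probability space P is that of
   (C,D) ~ G, Dt ~ K(C) (drawn from C only), U ~ PU independent. *)
Definition env_law {R : realType} {dO dC dD dU} {Om : measurableType dO}
  {TC : measurableType dC} {TD : measurableType dD} {TU : measurableType dU}
  (P : probability Om R) (C : Om -> TC) (D Dt : Om -> TD) (U : Om -> TU)
  (G : probability (TC * TD)%type R) (K : R.-pker TC ~> TD)
  (PU : probability TU R) : Prop :=
  forall f : TC * TD * TD * TU -> \bar R, measurable_fun [set: TC * TD * TD * TU] f ->
    (forall x, 0 <= f x)%E ->
    (\int[P]_w f (C w, D w, Dt w, U w) =
     \int[G]_z \int[K z.1]_d' \int[PU]_u f (z.1, z.2, d', u))%E.

Definition indep2 {R : realType} {dO dA dB} {Om : measurableType dO}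
  {TA : measurableType dA} {TB : measurableType dB}
  (P : probability Om R) (X : Om -> TA) (Y : Om -> TB) : Prop :=
  forall A B, measurable A -> measurable B ->
    P (X @^-1` A `&` Y @^-1` B) = (P (X @^-1` A) * P (Y @^-1` B))%E.

(* discrete energy distance eps_01(A,B) for independent A, B defined on P:
   2E[1{A<>B}] - E[1{A<>A'}] - E[1{B<>B'}], the independent copies being
   realized on the product P x P. *)
Definition neq_ind {R : realType} {T : eqType} (a b : T) : R := (a != b)%:R.

Definition eps01 {R : realType} {dO} {Om : measurableType dO} {T : eqType}
  (P : probability Om R) (A B : Om -> T) : R :=
  2 * fine (\int[P]_w \int[P]_w' (neq_ind (A w) (B w') : R)%:E)%E
  - fine (\int[P]_w \int[P]_w' (neq_ind (A w) (A w') : R)%:E)%E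
  - fine (\int[P]_w \int[P]_w' (neq_ind (B w) (B w') : R)%:E)%E.

Definition eps_c {R : realType} {dO dD} {Om : measurableType dO}
  {TD : measurableType dD} (P : probability Om R) (c : TD -> TD)
  (A B : Om -> TD) : R := eps01 P (c \o A) (c \o B).

Definition phi_obj {R : realType} {dO dD dU} {Om : measurableType dO}
  {TD : measurableType dD} {TU : measurableType dU} (P : probability Om R)
  (c : TD -> TD) (hl : TD * TU -> R) (D D1 D2 : Om -> TD) (U : Om -> TU)
  (f : TD * TU -> R) : R :=
  Ex P (fun w => `|f (c (D1 w), U w) - hl (D w, U w)|)
  + Ex P (fun w => `|f (c (D2 w), U w) - hl (D w, U w)|).

Definition gamma_q {R : realType} {dO dD dU} {Om : measurableType dO}
  {TD : measurableType dD} {TU : measurableType dU} (P : probability Om R)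
  (c : TD -> TD) (hl : TD * TU -> R) (D1 D2 : Om -> TD) (U : Om -> TU) : R :=
  Ex P (fun w => `|hl (c (D1 w), U w) - hl (D1 w, U w)|)
  + Ex P (fun w => `|hl (c (D2 w), U w) - hl (D2 w, U w)|).

Definition delta_q {R : realType} {dO dD dU} {Om : measurableType dO}
  {TD : measurableType dD} {TU : measurableType dU} (P : probability Om R)
  (c : TD -> TD) (hl g : TD * TU -> R) (U : Om -> TU) : R :=
  Ex P (fun w => (\sum_(x \in range c) `|g (x, U w) - hl (x, U w)|)%R).

(* Main.v *)
Require Import Defs.
From HB Require Import structures.
From mathcomp Require Import all_boot all_order ssralg ssrnum ssrint interval matrix.
From mathcomp Require Import mathcomp_extra boolp classical_sets functions.
From mathcomp Require Import cardinality fsbigop reals ereal topology.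
From mathcomp Require Import normedtype sequences esum measure.
From mathcomp Require Import measurable_realfun numfun lebesgue_measure.
From mathcomp Require Import lebesgue_integral kernel probability.
Import Order.TTheory GRing.Theory Num.Theory.
Local Open Scope classical_set_scope.
Local Open Scope ring_scope.
From mathcomp Require Import ring lra.
Set Implicit Arguments. Unset Strict Implicit. Unset Printing Implicit Defensive.

Section ExSec.
Context (R : realType) (dO : measure_display) (Om : measurableType dO) (P : probability Om R).

Definition bnd (f : Om -> R) := measurable_fun setT f /\ exists M : R, forall w, 0 <= f w <= M.

Lemma bnd_mE f : bnd f -> measurable_fun setT (fun w => (f w)%:E).
Proof. by case=> mf _; exact/measurable_EFinP. Qed.

Lemma int_fin f : bnd f -> (\int[P]_w (f w)%:E)%E = (Ex P f)%:E.
Proof.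
move=> [mf [M hM]]; rewrite /Ex fineK //.
have i0 : (0 <= \int[P]_w (f w)%:E)%E.
  by apply: integral_ge0 => w _; rewrite lee_fin; case/andP: (hM w).
rewrite ge0_fin_numE //.
apply: (@le_lt_trans _ _ (\int[P]_w (cst M%:E) w)%E); last first.
  rewrite integral_cst //. set X := (X in (_ * X)%E). have -> : X = 1%E by exact: probability_setT.
  by rewrite mule1 ltey.
apply: ge0_le_integral => //.
- by move=> w _; rewrite lee_fin; case/andP: (hM w).
- exact/measurable_EFinP.
- by move=> w _; rewrite lee_fin; case/andP: (hM w).
Qed.

Lemma bnd_ge0 f : bnd f -> forall w, 0 <= f w.
Proof. by case=> _ [M hM] w; case/andP: (hM w). Qed.

Lemma Ex_ge0 f : bnd f -> 0 <= Ex P f.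
Proof.
move=> bf; rewrite /Ex fine_ge0 //; apply: integral_ge0 => w _.
by rewrite lee_fin bnd_ge0.
Qed.

Lemma Ex_le f g : bnd f -> bnd g -> (forall w, f w <= g w) -> Ex P f <= Ex P g.
Proof.
move=> bf bg fg; rewrite -lee_fin -!int_fin //.
apply: ge0_le_integral => //; first by move=> w _; rewrite lee_fin bnd_ge0.
- exact: bnd_mE.
- exact: bnd_mE.
- by move=> w _; rewrite lee_fin.
Qed.

Lemma bnd_add f g : bnd f -> bnd g -> bnd (fun w => f w + g w).
Proof.
move=> [mf [M hM]] [mg [N hN]]; split; first exact: measurable_funD.
exists (M + N) => w; case/andP: (hM w) => ? ?; case/andP: (hN w) => ? ?.
by rewrite addr_ge0 ?lerD.
Qed.

Lemma bnd_cst k : 0 <= k -> bnd (fun _ => k).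
Proof. by move=> k0; split; [exact: measurable_cst|exists k => w; rewrite k0 lexx]. Qed.

Lemma bnd_mul f g : bnd f -> bnd g -> bnd (fun w => f w * g w).
Proof.
move=> [mf [M hM]] [mg [N hN]]; split; first exact: measurable_funM.
exists (M * N) => w; case/andP: (hM w) => ? ?; case/andP: (hN w) => ? ?.
by rewrite mulr_ge0 ?ler_pM.
Qed.

Lemma bnd_sum (I : Type) (s : seq I) (f : I -> Om -> R) :
  (forall i, bnd (f i)) -> bnd (fun w => \sum_(i <- s) f i w).
Proof.
move=> bf; elim: s => [|i s [ms [M hM]]].
  by under eq_fun do rewrite big_nil; exact: bnd_cst.
under eq_fun do rewrite big_cons; apply: bnd_add => //; exact: (conj ms (ex_intro _ M hM)).
Qed.

Lemma Ex_add f g : bnd f -> bnd g -> Ex P (fun w => f w + g w) = Ex P f + Ex P g.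
Proof.
move=> bf bg; apply: EFin_inj; rewrite EFinD -!int_fin //; last exact: bnd_add.
under eq_integral do rewrite EFinD.
by apply: ge0_integralD => //; try (by move=> w _; rewrite lee_fin bnd_ge0); exact: bnd_mE.
Qed.

Lemma Ex_cst k : 0 <= k -> Ex P (fun _ => k) = k.
Proof.
move=> k0; rewrite /Ex (_ : (fun w => k%:E) = cst k%:E) // integral_cst //.
set X := (X in (_ * X)%E); have -> : X = 1%E by exact: probability_setT.
by rewrite mule1.
Qed.

Lemma Ex_scale k f : 0 <= k -> bnd f -> Ex P (fun w => k * f w) = k * Ex P f.
Proof.
move=> k0 bf; apply: EFin_inj; rewrite EFinM -!int_fin //; last exact: bnd_mul (bnd_cst k0) bf.
under eq_integral do rewrite EFinM.
apply: ge0_integralZl => //; first exact: bnd_mE.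
by move=> w _; rewrite lee_fin bnd_ge0.
Qed.

Lemma Ex_scaler k f : 0 <= k -> bnd f -> Ex P (fun w => f w * k) = Ex P f * k.
Proof.
move=> k0 bf; rewrite mulrC -Ex_scale //.
by congr Ex; apply: funext => w; rewrite mulrC.
Qed.

Lemma Ex_sum (I : Type) (s : seq I) (f : I -> Om -> R) :
  (forall i, bnd (f i)) -> Ex P (fun w => \sum_(i <- s) f i w) = \sum_(i <- s) Ex P (f i).
Proof.
move=> bf; elim: s => [|i s IH].
  by under eq_fun do rewrite big_nil; rewrite big_nil Ex_cst.
under eq_fun do rewrite big_cons; rewrite big_cons Ex_add ?IH //; exact: bnd_sum.
Qed.
End ExSec.

Lemma int_cst1 (R : realType) d (T : measurableType d) (mu : measure T R) (r : \bar R) :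
  mu setT = 1%E -> (\int[mu]_x r = r)%E.
Proof. by move=> h; rewrite (_ : (fun _ => r) = cst r) // integral_cst // h mule1. Qed.

Lemma mcomp d1 d2 d3 (T1 : measurableType d1) (T2 : measurableType d2) (T3 : measurableType d3)
  (f : T2 -> T3) (g : T1 -> T2) :
  measurable_fun setT f -> measurable_fun setT g -> measurable_fun setT (fun x => f (g x)).
Proof. by move=> mf mg; exact: (measurableT_comp mf mg). Qed.

Lemma mEF (R : realType) d (T : measurableType d) (f : T -> R) :
  measurable_fun setT f -> measurable_fun setT (fun x => (f x)%:E).
Proof. by move=> mf; exact/measurable_EFinP. Qed.

Section EnvProd.
Context (R : realType) (dO dC dD dU : measure_display) (Om : measurableType dO)
  (TC : measurableType dC) (TD : measurableType dD) (TU : measurableType dU)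
  (P : probability Om R) (C : Om -> TC) (D Dt : Om -> TD) (U : Om -> TU)
  (G : probability (TC * TD)%type R) (K : R.-pker TC ~> TD) (PU : probability TU R).

Definition bndf d (T : measurableType d) (f : T -> R) :=
  measurable_fun setT f /\ exists M : R, forall w, 0 <= f w <= M.

Lemma bnd_comp d (T : measurableType d) (f : T -> R) (X : Om -> T) :
  measurable_fun setT X -> bndf f -> bnd (fun w => f (X w)).
Proof. by move=> mX [mf [M hM]]; split; [exact: mcomp|exists M]. Qed.

Hypothesis hlaw : env_law P C D Dt U G K PU.
Hypothesis mDt : measurable_fun setT Dt.
Hypothesis mU : measurable_fun setT U.

Lemma env_prod (phi : TD -> R) (psi : TU -> R) : bndf phi -> bndf psi ->
  Ex P (fun w => phi (Dt w) * psi (U w)) = Ex P (fun w => phi (Dt w)) * Ex P (fun w => psi (U w)).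
Proof.
move=> bphi bpsi.
have [mphi [M hM]] := bphi; have [mpsi [N hN]] := bpsi.
have phi0 x : 0 <= phi x by case/andP: (hM x).
have psi0 x : 0 <= psi x by case/andP: (hN x).
have bphiU := bnd_comp mDt bphi; have bpsiU := bnd_comp mU bpsi.
set e := Ex P (fun w => psi (U w)).
have e0 : 0 <= e by exact: Ex_ge0.
have eJ : (\int[PU]_u (psi u)%:E = e%:E)%E.
  rewrite -int_fin //.
  rewrite (@hlaw (fun x : TC * TD * TD * TU => (psi x.2)%:E)); last 2 first.
  - by apply: mEF; exact: mcomp.
  - by move=> x; rewrite lee_fin.
  rewrite /=; symmetry.
  transitivity (\int[G]_z (\int[PU]_u (psi u)%:E))%E.
    by apply: eq_integral => z _; apply: int_cst1; exact: prob_kernel.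
  by apply: int_cst1; exact: probability_setT.
apply: EFin_inj; rewrite EFinM -!int_fin //; last exact: bnd_mul.
rewrite (@hlaw (fun x : TC * TD * TD * TU => (phi x.1.2 * psi x.2)%:E)); last 2 first.
- apply: mEF; apply: measurable_funM; apply: mcomp => //.
  exact: mcomp measurable_snd measurable_fst.
- by move=> x; rewrite lee_fin mulr_ge0.
transitivity (\int[G]_z \int[K z.1]_d' \int[PU]_u (phi d' * e)%:E)%E.
  apply: eq_integral => z _; apply: eq_integral => d' _ /=.
  under eq_integral do rewrite EFinM.
  transitivity ((phi d')%:E * \int[PU]_u (psi u)%:E)%E.
    apply: ge0_integralZl => //; [exact: mEF | by move=> u _; rewrite lee_fin | by rewrite lee_fin].
  rewrite eJ -EFinM; symmetry; apply: int_cst1; exact: probability_setT.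
rewrite -(@hlaw (fun x : TC * TD * TD * TU => (phi x.1.2 * e)%:E)); last 2 first.
- apply: mEF; apply: measurable_funM; last exact: measurable_cst.
  apply: mcomp => //; exact: mcomp measurable_snd measurable_fst.
- by move=> x; rewrite lee_fin mulr_ge0.
rewrite /= (int_fin P bpsiU) (int_fin P bphiU) -EFinM -Ex_scaler // int_fin //; exact: bnd_mul bphiU (bnd_cst Om e0).
Qed.
End EnvProd.

Lemma cs (R : realType) (I : Type) (s : seq I) (u v : I -> R) :
  (\sum_(i <- s) u i * v i) ^+ 2 <= (\sum_(i <- s) u i ^+ 2) * (\sum_(i <- s) v i ^+ 2).
Proof.
set A := \sum_(i <- s) u i ^+ 2; set C := \sum_(i <- s) v i ^+ 2.
set B := \sum_(i <- s) u i * v i.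
have H : 0 <= \sum_(i <- s) \sum_(j <- s) (u i * v j - u j * v i) ^+ 2.
  by apply: sumr_ge0 => i _; apply: sumr_ge0 => j _; exact: sqr_ge0.
have E : \sum_(i <- s) \sum_(j <- s) (u i * v j - u j * v i) ^+ 2 = A * C + C * A - 2 * (B * B).
  transitivity (\sum_(i <- s) (u i ^+ 2 * C + v i ^+ 2 * A - 2 * (u i * v i * B))).
    apply: eq_bigr => i _.
    rewrite /A /B /C !mulr_sumr -sumrN -!big_split /=.
    by apply: eq_bigr => j _; ring.
  by rewrite !big_split /= sumrN -!mulr_suml -mulr_sumr -/A -/C -mulr_suml.
nra.
Qed.

Lemma cs_bound (R : realType) (I : Type) (s : seq I) (a dd : I -> R) :
  (forall i, 0 <= a i <= 1) ->
  \sum_(i <- s) a i * dd i <= Num.sqrt ((\sum_(i <- s) dd i ^+ 2) * \sum_(i <- s) a i).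
Proof.
move=> ha; case: (leP (\sum_(i <- s) a i * dd i) 0) => h.
  exact: le_trans h (sqrtr_ge0 _).
rewrite -(ger0_norm (ltW h)) -sqrtr_sqr; apply: ler_wsqrtr.
apply: le_trans (cs s a dd) _; rewrite mulrC; apply: ler_wpM2l.
  by apply: sumr_ge0 => i _; exact: sqr_ge0.
apply: ler_sum => i _; have /andP[? ?] := ha i; nra.
Qed.

Lemma decomp (R : realType) (T : eqType) (s : seq T) (y : T) (F : T -> R) :
  uniq s -> y \in s -> \sum_(x <- s) (y == x)%:R * F x = F y.
Proof.
move=> us ys; rewrite (bigD1_seq y) //= eqxx mul1r big1 ?addr0 // => x.
by rewrite eq_sym => /negbTE ->; rewrite mul0r.
Qed.

Definition sc d (T : measurableType d) (c : T -> T) := finmap.enum_fset (fset_set (range c)).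

Section Main.
Context (R : realType) (dO dD dU : measure_display) (Om : measurableType dO)
  (TD : measurableType dD) (TU : measurableType dU) (P : probability Om R) (c : TD -> TD).
Hypothesis hc : coarsening c.

Lemma mc : measurable_fun setT c.
Proof.
have [fin [_ fib]] := hc.
move=> _ Y mY; rewrite setTI.
have -> : c @^-1` Y = \bigcup_(x in range c `&` Y) c @^-1` [set x].
  apply/seteqP; split => z /=.
    by move=> Yz; exists (c z) => //; split => //; exists z.
  by case=> x [_ Yx] /= ->.
apply: fin_bigcup_measurable; first exact: finite_setIl.
by move=> x _; exact: fib.
Qed.

Lemma mind x : measurable_fun setT (fun y => (c y == x)%:R : R).
Proof.
have -> : (fun y => (c y == x)%:R : R) = \1_(c @^-1` [set x]).
  apply: funext => y; rewrite indicE.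
  case: (c y =P x) => [e|ne]; first by rewrite mem_set.
  by rewrite memNset.
apply: measurable_indic; exact: hc.2.2.
Qed.

Lemma cs_in z : c z \in sc c.
Proof. by rewrite /sc (in_fset_set hc.1) mem_set //; exists z. Qed.

Lemma sc_uniq : uniq (sc c).
Proof. exact: finmap.fset_uniq. Qed.

Lemma bndf_ind x : bndf (fun y => (c y == x)%:R : R).
Proof. split; [exact: mind|exists 1 => y]; case: eqP => _; rewrite ?lexx ?ler01 //. Qed.

Lemma absdiff_bnd d0 (T0 : measurableType d0) (f1 f2 : TD * TU -> R) (X Y : T0 -> TD) (V : T0 -> TU) :
  test_fun f1 -> test_fun f2 -> measurable_fun setT X -> measurable_fun setT Y ->
  measurable_fun setT V ->
  bndf (fun w => `|f1 (X w, V w) - f2 (Y w, V w)|) /\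
  forall w, `|f1 (X w, V w) - f2 (Y w, V w)| <= 1.
Proof.
move=> [m1 b1] [m2 b2] mX mY mV.
have bd w : `|f1 (X w, V w) - f2 (Y w, V w)| <= 1.
  have /andP[? ?] := b1 (X w, V w); have /andP[? ?] := b2 (Y w, V w).
  rewrite ler_norml; apply/andP; split; lra.
split => //; split; last by exists 1 => w; rewrite normr_ge0 bd.
apply: mcomp; first exact: normr_measurable.
apply: measurable_funB; apply: mcomp => //; exact: measurable_fun_pair.
Qed.

Lemma Ex_1m f : bnd f -> (forall w, f w <= 1) ->
  bnd (fun w => 1 - f w) /\ Ex P (fun w => 1 - f w) = 1 - Ex P f.
Proof.
move=> bf f1.
have b1 : bnd (fun w => 1 - f w).
  split; first by apply: (@measurable_funB _ _ _ _ (fun=> 1) f); [exact: measurable_cst | case: bf].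
  by exists 1 => w; have := bnd_ge0 bf w; have := f1 w; move=> ? ?; apply/andP; split; lra.
split => //.
have := Ex_add P b1 bf.
under eq_fun do rewrite subrK.
rewrite Ex_cst //; lra.
Qed.
End Main.

Lemma A_dec (R : realType) (dO dC dD dU : measure_display) (Om : measurableType dO)
  (TC : measurableType dC) (TD : measurableType dD) (TU : measurableType dU)
  (P : probability Om R) (C : Om -> TC) (D Dt : Om -> TD) (U : Om -> TU)
  (G : probability (TC * TD)%type R) (K : R.-pker TC ~> TD) (PU : probability TU R)
  (c : TD -> TD) (g hl : TD * TU -> R) :
  coarsening c -> env_law P C D Dt U G K PU -> measurable_fun setT Dt ->
  measurable_fun setT U -> test_fun g -> test_fun hl ->
  Ex P (fun w => `|g (c (Dt w), U w) - hl (c (Dt w), U w)|) =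
  \sum_(x <- sc c) Ex P (fun w => (c (Dt w) == x)%:R) * Ex P (fun w => `|g (x, U w) - hl (x, U w)|).
Proof.
move=> hc law mDt mU tg th.
have bF x : bndf (fun u => `|g (x, u) - hl (x, u)|).
  have [] := absdiff_bnd (X := fun _ : TU => x) (Y := fun _ : TU => x) (V := id) tg th.
  - exact: measurable_cst.
  - exact: measurable_cst.
  - exact: measurable_id.
  by [].
transitivity (Ex P (fun w => \sum_(x <- sc c) (c (Dt w) == x)%:R * `|g (x, U w) - hl (x, U w)|)).
  congr Ex; apply: funext => w.
  by rewrite (@decomp _ _ _ _ (fun x => `|g (x, U w) - hl (x, U w)|)) //; [exact: sc_uniq | exact: cs_in].
rewrite Ex_sum; last first.
  move=> x; apply: bnd_mul; [exact: bnd_comp mDt (bndf_ind R hc x) | exact: bnd_comp mU (bF x)].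
apply: eq_bigr => x _.
exact: (env_prod law mDt mU (bndf_ind R hc x) (bF x)).
Qed.

Lemma Q_val (R : realType) (dO dD : measure_display) (Om : measurableType dO)
  (TD : measurableType dD) (P : probability Om R) (c : TD -> TD) (A B : Om -> TD) :
  coarsening c -> measurable_fun setT A -> measurable_fun setT B ->
  fine (\int[P]_w \int[P]_w' (neq_ind (c (A w)) (c (B w')) : R)%:E)%E =
  1 - \sum_(x <- sc c) Ex P (fun w => (c (A w) == x)%:R) * Ex P (fun w => (c (B w) == x)%:R).
Proof.
move=> hc mA mB.
set pB := fun y => Ex P (fun w' => (c (B w') == y)%:R : R).
have bI (X : Om -> TD) y : measurable_fun setT X -> bnd (fun w => (c (X w) == y)%:R : R).
  by move=> mX; exact: bnd_comp mX (bndf_ind R hc y).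
have I1 (X : Om -> TD) y w : (c (X w) == y)%:R <= 1 :> R by case: eqP.
have pB1 y : pB y <= 1.
  apply: (le_trans (Ex_le P (bI B y mB) (bnd_cst Om ler01) (I1 B y))).
  by rewrite Ex_cst.
have pB0 y : 0 <= pB y := Ex_ge0 P (bI B y mB).
have inner w : (\int[P]_w' (neq_ind (c (A w)) (c (B w')) : R)%:E)%E = (1 - pB (c (A w)))%:E.
  have [b1 e1] := Ex_1m P (bI B (c (A w)) mB) (fun w' => I1 B (c (A w)) w').
  transitivity (\int[P]_w' (1 - (c (B w') == c (A w))%:R : R)%:E)%E.
    apply: eq_integral => w' _; congr EFin; rewrite /neq_ind.
    case: (c (A w) =P c (B w')) => [->|ne]; first by rewrite eqxx subrr.
    have -> : (c (B w') == c (A w)) = false by apply/eqP => e; apply: ne.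
    by rewrite subr0.
  by rewrite int_fin // e1.
transitivity (Ex P (fun w => 1 - \sum_(x <- sc c) (c (A w) == x)%:R * pB x)).
  rewrite /Ex; congr fine; apply: eq_integral => w _; rewrite inner; congr EFin.
  by rewrite (decomp pB (sc_uniq c) (cs_in hc (A w))).
have bS : bnd (fun w => \sum_(x <- sc c) (c (A w) == x)%:R * pB x).
  apply: bnd_sum => x; apply: bnd_mul; [exact: bI | exact: bnd_cst].
have S1 w : \sum_(x <- sc c) (c (A w) == x)%:R * pB x <= 1.
  by rewrite (decomp pB (sc_uniq c) (cs_in hc (A w))).
have [_ ->] := Ex_1m P bS S1.
congr (_ - _); rewrite Ex_sum; last first.
  move=> x; apply: bnd_mul; [exact: bI | exact: bnd_cst].
by apply: eq_bigr => x _; rewrite Ex_scaler //; exact: bI.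
Qed.

Lemma eps_val (R : realType) (dO dD : measure_display) (Om : measurableType dO)
  (TD : measurableType dD) (P : probability Om R) (c : TD -> TD) (D1 D2 : Om -> TD) :
  coarsening c -> measurable_fun setT D1 -> measurable_fun setT D2 ->
  eps_c P c D1 D2 = \sum_(x <- sc c) (Ex P (fun w => (c (D1 w) == x)%:R)
      - Ex P (fun w => (c (D2 w) == x)%:R)) ^+ 2.
Proof.
move=> hc m1 m2; rewrite /eps_c /eps01 /= !Q_val //.
set p1 := fun x => Ex P (fun w => (c (D1 w) == x)%:R : R).
set p2 := fun x => Ex P (fun w => (c (D2 w) == x)%:R : R).
have -> : \sum_(x <- sc c) (p1 x - p2 x) ^+ 2 =
   \sum_(x <- sc c) p1 x * p1 x + \sum_(x <- sc c) p2 x * p2 x - 2 * \sum_(x <- sc c) p1 x * p2 x.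
  rewrite mulr_sumr -sumrN -!big_split /=; apply: eq_bigr => x _; ring.
rewrite -/p1 -/p2; ring.
Qed.

Lemma tri1 (R : realType) (a b x y : R) : `|a - b| <= `|x - a| + `|x - y| + `|y - b|.
Proof.
have -> : a - b = - (x - a) + (x - y) + (y - b) by ring.
have := ler_normD (- (x - a) + (x - y)) (y - b).
have := ler_normD (- (x - a)) (x - y); rewrite normrN; lra.
Qed.

Lemma tri2 (R : realType) (a b x y : R) : `|x - y| <= `|x - a| + `|a - b| + `|y - b|.
Proof.
have -> : x - y = (x - a) + (a - b) - (y - b) by ring.
have := ler_normD ((x - a) + (a - b)) (- (y - b)).
have := ler_normD (x - a) (a - b); rewrite normrN; lra.
Qed.

Lemma Ex01 (R : realType) dO (Om : measurableType dO) (P : probability Om R) f :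
  bnd f -> (forall w, f w <= 1) -> 0 <= Ex P f <= 1.
Proof.
move=> bf f1; rewrite Ex_ge0 //=.
by apply: le_trans (Ex_le P bf (bnd_cst Om ler01) f1) _; rewrite Ex_cst.
Qed.

Unset Implicit Arguments.

Theorem theorem1 (R : realType) (d L : nat) (dC dD dU dO : measure_display)
  (TC : measurableType dC) (TD : measurableType dD) (TU : measurableType dU)
  (G : probability (TC * TD)%type R) (PU : probability TU R)
  (h : 'I_L -> TD * TU -> R) (T S : environment R d TC TD)
  (theta : 'rV[R]_d) (c : TD -> TD) (l : 'I_L)
  (Om : measurableType dO) (P : probability Om R)
  (C : Om -> TC) (D D1 D2 : Om -> TD) (U : Om -> TU) (g : TD * TU -> R) :
  (forall k, test_fun (h k)) ->
  coarsening c ->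
  measurable_fun setT C -> measurable_fun setT D ->
  measurable_fun setT D1 -> measurable_fun setT D2 -> measurable_fun setT U ->
  env_law P C D D1 U G (T theta) PU ->
  env_law P C D D2 U G (S theta) PU ->
  indep2 P D1 D2 -> indep2 P D1 U -> indep2 P D2 U ->
  test_fun g ->
  (forall f, test_fun f -> phi_obj P c (h l) D D1 D2 U g <= phi_obj P c (h l) D D1 D2 U f) ->
  test_div G PU (h l) T theta <=
    gamma_q P c (h l) D1 D2 U + phi_obj P c (h l) D D1 D2 U g
    + test_div G PU (h l) S theta
    + Num.sqrt (eps_c P c D1 D2 * delta_q P c (h l) g U).
Proof.
move=> hh hc mC mD mD1 mD2 mU law1 law2 _ _ _ hg _.
have th := hh l; have [mh hb] := th.
have mcD1 : measurable_fun setT (fun w => c (D1 w)) := mcomp (mc hc) mD1.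
have mcD2 : measurable_fun setT (fun w => c (D2 w)) := mcomp (mc hc) mD2.
have m4 : measurable_fun [set: TC * TD * TD * TU]
    (fun x => (`|h l (x.1.1.2, x.2) - h l (x.1.2, x.2)|)%:E).
  apply: mEF; apply: mcomp; first exact: normr_measurable.
  apply: measurable_funB; apply: mcomp mh _; apply: measurable_fun_pair => //.
  - exact: mcomp measurable_snd (mcomp measurable_fst measurable_fst).
  - exact: mcomp measurable_snd measurable_fst.
have eT : test_div G PU (h l) T theta = Ex P (fun w => `|h l (D w, U w) - h l (D1 w, U w)|).
  rewrite /test_div /Ex; congr fine; symmetry.
  exact: (law1 _ m4 (fun x => normr_ge0 _)).
have eS : test_div G PU (h l) S theta = Ex P (fun w => `|h l (D w, U w) - h l (D2 w, U w)|).
  rewrite /test_div /Ex; congr fine; symmetry.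
  exact: (law2 _ m4 (fun x => normr_ge0 _)).
have [bT _] := absdiff_bnd th th mD mD1 mU.
have [bS _] := absdiff_bnd th th mD mD2 mU.
have [bp1 _] := absdiff_bnd hg th mcD1 mD mU.
have [bp2 _] := absdiff_bnd hg th mcD2 mD mU.
have [bA1 _] := absdiff_bnd hg th mcD1 mcD1 mU.
have [bA2 _] := absdiff_bnd hg th mcD2 mcD2 mU.
have [bg1 _] := absdiff_bnd th th mcD1 mD1 mU.
have [bg2 _] := absdiff_bnd th th mcD2 mD2 mU.
set A1 := Ex P (fun w => `|g (c (D1 w), U w) - h l (c (D1 w), U w)|).
set A2 := Ex P (fun w => `|g (c (D2 w), U w) - h l (c (D2 w), U w)|).
have I1 : test_div G PU (h l) T theta <=
    Ex P (fun w => `|g (c (D1 w), U w) - h l (D w, U w)|) + A1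
    + Ex P (fun w => `|h l (c (D1 w), U w) - h l (D1 w, U w)|).
  rewrite eT -!Ex_add //; last exact: bnd_add.
  apply: Ex_le => //; first by do 2 apply: bnd_add => //.
  by move=> w; exact: tri1.
have I2 : A2 <= Ex P (fun w => `|g (c (D2 w), U w) - h l (D w, U w)|)
    + test_div G PU (h l) S theta
    + Ex P (fun w => `|h l (c (D2 w), U w) - h l (D2 w, U w)|).
  rewrite eS -!Ex_add //; last exact: bnd_add.
  apply: Ex_le => //; first by do 2 apply: bnd_add => //.
  by move=> w; exact: tri2.
set a := fun x => Ex P (fun w => `|g (x, U w) - h l (x, U w)|).
set p1 := fun x => Ex P (fun w => (c (D1 w) == x)%:R : R).
set p2 := fun x => Ex P (fun w => (c (D2 w) == x)%:R : R).
have eA1 : A1 = \sum_(x <- sc c) p1 x * a x := A_dec hc law1 mD1 mU hg th.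
have eA2 : A2 = \sum_(x <- sc c) p2 x * a x := A_dec hc law2 mD2 mU hg th.
have ha x : 0 <= a x <= 1.
  have [ba b1] := absdiff_bnd (X := fun _ : Om => x) (Y := fun _ : Om => x) hg th
     (measurable_cst x) (measurable_cst x) mU.
  exact: Ex01 ba b1.
have edelta : delta_q P c (h l) g U = \sum_(x <- sc c) a x.
  rewrite /delta_q.
  transitivity (Ex P (fun w => \sum_(x <- sc c) `|g (x, U w) - h l (x, U w)|)).
    by congr Ex; apply: funext => w; rewrite fsbig_finite //; exact: hc.1.
  rewrite Ex_sum // => x.
  have [ba _] := absdiff_bnd (X := fun _ : Om => x) (Y := fun _ : Om => x) hg th
     (measurable_cst x) (measurable_cst x) mU.
  exact: ba.
have eeps : eps_c P c D1 D2 = \sum_(x <- sc c) (p1 x - p2 x) ^+ 2 := eps_val P hc mD1 mD2.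
have I3 : A1 - A2 <= Num.sqrt (eps_c P c D1 D2 * delta_q P c (h l) g U).
  rewrite eeps edelta.
  have -> : A1 - A2 = \sum_(x <- sc c) a x * (p1 x - p2 x).
    rewrite eA1 eA2 -sumrN -big_split /=; apply: eq_bigr => x _; ring.
  exact: cs_bound.
rewrite /gamma_q /phi_obj; lra.
Qed.
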